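(* Let $a_{12},a_{34},d>0$ with $d>\max\{a_{12},a_{34}\}$, and consider the isosceles trapezium in the Euclidean plane with vertices $A_1'=(-a_{12}/2,\,d)$, $A_2'=(a_{12}/2,\,d)$, $A_4=(-a_{34}/2,\,0)$, $A_3=(a_{34}/2,\,0)$. Let $F$ be the intersection point of the diagonals $A_1'A_3$ and $A_2'A_4$, let $\theta=\angle A_1'FA_2'$, let $F_{12}$ be the orthocenter of triangle $A_1'FA_2'$ and $F_{34}$ the orthocenter of triangle $A_4FA_3$, and set $w(\theta)=2\sin\frac{\theta}{2}$. Then $$l_{minT}:=2\,|A_1'F_{12}|+2\,|A_3F_{34}|+w(\theta)\,|F_{12}F_{34}| = 2(a_{34}+a_{12})\cos\frac{\theta}{2}.$$
   Context: $|XY|$ denotes Euclidean distance. The segment $M_{12}M_{34}$ joining the midpoints $M_{12}=(0,d)$ of $A_1'A_2'$ and $M_{34}=(0,0)$ of $A_4A_3$ is the common perpendicular of the two parallel sides, of length $d$. The points $F_{12}$ and $F_{34}$ lie on $M_{12}M_{34}$, with $\angle A_1'F_{12}A_2'=\angle A_3F_{34}A_4=180^\circ-\theta$. In the paper, $F_{12},F_{34}$ with the common weight $w(\theta)$ on the segment $F_{12}F_{34}$ (and unit weights on the four edges to the vertices) form the ''minimum construction tree'' of the trapezium. *)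

(* Defs.v *)
From Stdlib Require Import Reals.
Open Scope R_scope.

Definition point := (R * R)%type.

Definition edist (P Q : point) : R :=
  sqrt ((fst P - fst Q) ^ 2 + (snd P - snd Q) ^ 2).

Definition dotv (O P Q : point) : R :=
  (fst P - fst O) * (fst Q - fst O) + (snd P - snd O) * (snd Q - snd O).

Definition angle (P O Q : point) : R :=
  acos (dotv O P Q / (edist O P * edist O Q)).

Definition on_line (X P Q : point) : Prop :=
  exists t : R, X = (fst P + t * (fst Q - fst P), snd P + t * (snd Q - snd P)).

Definition is_intersection (F P1 Q1 P2 Q2 : point) : Prop :=
  on_line F P1 Q1 /\ on_line F P2 Q2.

Definition is_orthocenter (H P Q S : point) : Prop :=
  (fst H - fst P) * (fst S - fst Q) + (snd H - snd P) * (snd S - snd Q) = 0 /\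
  (fst H - fst Q) * (fst S - fst P) + (snd H - snd Q) * (snd S - snd P) = 0 /\
  (fst H - fst S) * (fst Q - fst P) + (snd H - snd S) * (snd Q - snd P) = 0.

Definition w (theta : R) : R := 2 * sin (theta / 2).

(* Main.v *)
Require Import Defs.
From Stdlib Require Import Reals Lra Psatz.
Open Scope R_scope.

Theorem proposition1 (a12 a34 d : R) (F F12 F34 : point) :
  0 < a12 -> 0 < a34 -> 0 < d -> Rmax a12 a34 < d ->
  let A1' : point := (- a12 / 2, d) in
  let A2' : point := (a12 / 2, d) in
  let A4 : point := (- a34 / 2, 0) in
  let A3 : point := (a34 / 2, 0) in
  is_intersection F A1' A3 A2' A4 ->
  is_orthocenter F12 A1' F A2' ->
  is_orthocenter F34 A4 F A3 ->
  let theta := angle A1' F A2' in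
  2 * edist A1' F12 + 2 * edist A3 F34 + w theta * edist F12 F34
    = 2 * (a34 + a12) * cos (theta / 2).
Proof.
  intros ha hb hd hm A1' A2' A4 A3 [[t Ht] [t' Ht']] O1 O2 theta.
  assert (hma : a12 < d) by (generalize (Rmax_l a12 a34); lra).
  assert (hmb : a34 < d) by (generalize (Rmax_r a12 a34); lra).
  destruct F as [fx fy]; destruct F12 as [x1 y1]; destruct F34 as [x3 y3].
  unfold A1', A2', A3, A4 in *; simpl in *.
  injection Ht as Hx Hy. injection Ht' as Hx' Hy'.
  assert (tt : t = t') by nra.
  subst t'.
  assert (Hab : 0 < a12 + a34) by lra.
  assert (tv : t = a12 / (a12 + a34)).
  { apply (Rmult_eq_reg_r (a12 + a34)); [|lra]. field_simplify; lra. }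
  set (k := (a12 + a34) / (2 * d)).
  assert (hk0 : 0 < k) by (unfold k; apply Rdiv_lt_0_compat; lra).
  assert (hk1 : k < 1) by (unfold k; apply (Rmult_lt_reg_r (2*d)); [lra|]; field_simplify; lra).
  assert (fx0 : fx = 0) by (rewrite Hx, tv; field; lra).
  assert (fyv : fy = a34 / (2 * k)) by (rewrite Hy, tv; unfold k; field; lra).
  assert (pv : d - fy = a12 / (2 * k)) by (rewrite fyv; unfold k; field; lra).
  destruct O1 as [E1 [E2 _]]. destruct O2 as [G1 [G2 _]].
  simpl in E1, E2, G1, G2. rewrite fx0 in E1, E2, G1, G2.
  assert (x10 : x1 = 0).
  { ring_simplify in E2. nra. }
  assert (x30 : x3 = 0).
  { ring_simplify in G2. nra. }
  subst x1 x3.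
  assert (kpos : 0 < a12 / (2 * k)) by (apply Rdiv_lt_0_compat; lra).
  assert (kpos' : 0 < a34 / (2 * k)) by (apply Rdiv_lt_0_compat; lra).
  assert (y1v : y1 = d - a12 * k / 2).
  { assert (h : (y1 - d) * (a12/(2*k)) = -(a12^2/4)) by (rewrite <- pv; nra).
    apply (Rmult_eq_reg_r (a12/(2*k))); [|lra].
    replace ((d - a12*k/2) * (a12/(2*k))) with (d*(a12/(2*k)) - a12^2/4) by (field; lra).
    nra. }
  assert (y3v : y3 = a34 * k / 2).
  { assert (h : y3 * (a34/(2*k)) = a34^2/4) by (rewrite <- fyv; nra).
    apply (Rmult_eq_reg_r (a34/(2*k))); [|lra].
    replace ((a34*k/2) * (a34/(2*k))) with (a34^2/4) by (field; lra).
    nra. }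
  assert (cth : cos theta = (1 - k^2) / (1 + k^2)).
  { assert (eA : edist (0,fy) (-a12/2,d) = sqrt (a12^2/4 + (d-fy)^2)) by (unfold edist; cbn [fst snd]; apply (f_equal sqrt); field).
    assert (eB : edist (0,fy) (a12/2,d) = sqrt (a12^2/4 + (d-fy)^2)) by (unfold edist; cbn [fst snd]; apply (f_equal sqrt); field).
    assert (eD : dotv (0,fy) (-a12/2,d) (a12/2,d) = (-(a12^2/4)) + (d-fy)*(d-fy)) by (unfold dotv; cbn [fst snd]; field).
    unfold theta, angle. rewrite fx0, eA, eB, eD, sqrt_sqrt by nra.
    rewrite pv.
    assert (e : (-(a12^2/4) + (a12 / (2 * k)) * (a12 / (2 * k))) /
      (a12 ^ 2 / 4 + (a12 / (2 * k)) ^ 2) = (1 - k^2) / (1 + k^2)).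
    { field. split; [nra|]. split; [lra|].
      intro h. assert (0 < a12^2 * k^2 + a12^2) by nra. lra. }
    rewrite e. apply cos_acos.
    split; [apply (Rmult_le_reg_r (1+k^2)); [nra|]; field_simplify; nra|].
    apply (Rmult_le_reg_r (1+k^2)); [nra|]; field_simplify; nra. }
  assert (tb : 0 <= theta <= PI) by apply acos_bound.
  set (c := cos (theta/2)). set (s := sin (theta/2)).
  assert (c0 : 0 <= c) by (apply cos_ge_0; lra).
  assert (s0 : 0 <= s) by (apply sin_ge_0; lra).
  assert (c2 : c * c * (1 + k^2) = 1).
  { generalize (cos_2a_cos (theta/2)). replace (2*(theta/2)) with theta by field.
    fold c. rewrite cth. intro h.
    assert (h' : (1 - k ^ 2) = (2 * c * c - 1) * (1+k^2)).
    { rewrite <- h. field. nra. }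
    nra. }
  assert (cp : 0 < c) by (destruct c0 as [|e]; [lra| rewrite <- e in c2; lra]).
  assert (sv : s = k * c).
  { generalize (sin2 (theta/2)). fold s c. unfold Rsqr. intro h.
    assert (hs : s*s = (k*c)*(k*c)) by (rewrite h; lra).
    assert (hkc : 0 < k * c) by nra.
    assert (hp : (s - k*c) * (s + k*c) = 0) by lra.
    apply Rmult_integral in hp. destruct hp; lra. }
  unfold w. fold s.
  assert (d1 : edist (- a12 / 2, d) (0, y1) = a12 / (2 * c)).
  { unfold edist; cbn [fst snd]. apply sqrt_lem_1; [nra| left; apply Rdiv_lt_0_compat; lra|].
    rewrite y1v. apply (Rmult_eq_reg_r (c*c)); [|nra]. field_simplify; [|lra].
    nra. }
  assert (d2 : edist (a34 / 2, 0) (0, y3) = a34 / (2 * c)).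
  { unfold edist; cbn [fst snd]. apply sqrt_lem_1; [nra| left; apply Rdiv_lt_0_compat; lra|].
    rewrite y3v. apply (Rmult_eq_reg_r (c*c)); [|nra]. field_simplify; [|lra].
    nra. }
  assert (d3 : edist (0, y1) (0, y3) = d * (1 - k^2)).
  { unfold edist; cbn [fst snd]. assert (0 < 1 - k^2) by (assert (k*k < k) by nra; simpl; lra). apply sqrt_lem_1; [apply Rplus_le_le_0_compat; apply pow2_ge_0| apply Rmult_le_pos; lra|].
    rewrite y1v, y3v. unfold k. field. lra. }
  rewrite d1, d2, d3, sv.
  assert (kd : 2 * k * d = a12 + a34) by (unfold k; field; lra).
  apply (Rmult_eq_reg_r c); [|lra]. field_simplify; [|lra].
  nra.
Qed.
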